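(* $GL(\omega)$ acts transitively on the set of dense countably dimensional linear subspaces of $\omega$: for any two dense linear subspaces $E,F\subseteq\omega$ of countably infinite Hamel dimension there is $J\in GL(\omega)$ with $J(E)=F$.
   Context: $\omega=\mathbb{K}^{\mathbb{N}}$ with the product topology, $\mathbb{K}\in\{\mathbb{R},\mathbb{C}\}$. $GL(\omega)$ is the group of continuous linear bijections of $\omega$ with continuous inverse. *)

(* Defs.v *)
From Stdlib Require Import Reals.
Open Scope R_scope.

Definition Cx : Type := (R * R)%type.

(* The scalar field K is R or C. *)
Inductive field_choice := RealF | ComplexF.

Definition K (k : field_choice) : Type :=
  match k with RealF => R | ComplexF => Cx end.

Definition Kzero (k : field_choice) : K k :=
  match k return K k with RealF => 0 | ComplexF => (0, 0) end.

Definition Kadd (k : field_choice) : K k -> K k -> K k :=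
  match k return K k -> K k -> K k with
  | RealF => fun a b => a + b
  | ComplexF => fun z w => (fst z + fst w, snd z + snd w)
  end.

Definition Kmul (k : field_choice) : K k -> K k -> K k :=
  match k return K k -> K k -> K k with
  | RealF => fun a b => a * b
  | ComplexF => fun z w =>
      (fst z * fst w - snd z * snd w, fst z * snd w + snd z * fst w)
  end.

Definition Kopp (k : field_choice) : K k -> K k :=
  match k return K k -> K k with
  | RealF => fun a => - a
  | ComplexF => fun z => (- fst z, - snd z)
  end.

Definition Knorm (k : field_choice) : K k -> R :=
  match k return K k -> R with
  | RealF => fun a => Rabs a
  | ComplexF => fun z => sqrt (fst z * fst z + snd z * snd z)
  end.

Definition Kdist (k : field_choice) (a b : K k) : R :=
  Knorm k (Kadd k a (Kopp k b)).

Definition omega (k : field_choice) : Type := nat -> K k.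

Definition vzero (k : field_choice) : omega k := fun _ => Kzero k.
Definition vadd (k : field_choice) (x y : omega k) : omega k :=
  fun i => Kadd k (x i) (y i).
Definition vscal (k : field_choice) (a : K k) (x : omega k) : omega k :=
  fun i => Kmul k a (x i).

Fixpoint lincomb (k : field_choice) (b : nat -> omega k) (c : nat -> K k)
  (n : nat) : omega k :=
  match n with
  | O => vzero k
  | S m => vadd k (lincomb k b c m) (vscal k (c m) (b m))
  end.

(* Continuity of a map omega -> omega for the product topology
   (each coordinate of the image is continuous; basic neighbourhoods
   constrain finitely many coordinates). *)
Definition continuous_omega (k : field_choice) (T : omega k -> omega k) : Prop :=
  forall (x : omega k) (n : nat) (eps : R), 0 < eps ->
    exists (N : nat) (delta : R), 0 < delta /\
      forall y : omega k,
        (forall i, (i < N)%nat -> Kdist k (y i) (x i) < delta) ->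
        Kdist k (T y n) (T x n) < eps.

Definition is_linear_map (k : field_choice) (T : omega k -> omega k) : Prop :=
  (forall x y, T (vadd k x y) = vadd k (T x) (T y)) /\
  (forall a x, T (vscal k a x) = vscal k a (T x)).

Definition in_GL (k : field_choice) (T : omega k -> omega k) : Prop :=
  is_linear_map k T /\ continuous_omega k T /\
  exists S : omega k -> omega k,
    continuous_omega k S /\
    (forall x, S (T x) = x) /\ (forall y, T (S y) = y).

Definition is_subspace (k : field_choice) (E : omega k -> Prop) : Prop :=
  E (vzero k) /\
  (forall x y, E x -> E y -> E (vadd k x y)) /\
  (forall a x, E x -> E (vscal k a x)).

Definition dense (k : field_choice) (E : omega k -> Prop) : Prop :=
  forall (x : omega k) (N : nat) (delta : R), 0 < delta ->
    exists e, E e /\ forall i, (i < N)%nat -> Kdist k (e i) (x i) < delta.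

Definition lin_indep (k : field_choice) (b : nat -> omega k) : Prop :=
  forall (n : nat) (c : nat -> K k),
    lincomb k b c n = vzero k -> forall i, (i < n)%nat -> c i = Kzero k.

Definition countably_infinite_dim (k : field_choice) (E : omega k -> Prop) : Prop :=
  exists b : nat -> omega k,
    (forall i, E (b i)) /\ lin_indep k b /\
    (forall x, E x -> exists (n : nat) (c : nat -> K k), x = lincomb k b c n).

(* Main.v *)
Require Import Defs.
From Stdlib Require Import Reals Lra Lia Psatz List Arith Field Ring FunctionalExtensionality Classical ClassicalEpsilon.
Open Scope R_scope.

Definition Kone (k : field_choice) : K k :=
  match k return K k with RealF => 1 | ComplexF => (1, 0) end.
Definition Kinv (k : field_choice) : K k -> K k :=
  match k return K k -> K k with
  | RealF => fun a => / a
  | ComplexF => fun z => (fst z / (fst z * fst z + snd z * snd z),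
                          - snd z / (fst z * fst z + snd z * snd z))
  end.
Definition Ksub k (a b : K k) := Kadd k a (Kopp k b).
Definition Kdiv k (a b : K k) := Kmul k a (Kinv k b).

Lemma Kring k : ring_theory (Kzero k) (Kone k) (Kadd k) (Kmul k) (Ksub k) (Kopp k) eq.
Proof.
  unfold Ksub; destruct k; constructor; simpl; intros;
  try (destruct x); try (destruct y); try (destruct z); simpl; try ring;
  f_equal; ring.
Qed.

Lemma Kfield k : field_theory (Kzero k) (Kone k) (Kadd k) (Kmul k) (Ksub k) (Kopp k) (Kdiv k) (Kinv k) eq.
Proof.
  constructor.
  - apply Kring.
  - destruct k; simpl; [lra| intro H; injection H; lra].
  - reflexivity.
  - destruct k; simpl; intros p Hp.
    + field. auto.
    + destruct p as [a b]; simpl.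
      assert (a*a+b*b <> 0).
      { intro H0. apply Hp. assert (a = 0) by nra. assert (b=0) by nra. subst; reflexivity. }
      f_equal; field; auto.
Qed.

Section S.
Variable k : field_choice.
Add Field Kf : (Kfield k).
Lemma test (a b : K k) : Kmul k (Kadd k a b) (Kone k) = Kadd k b a.
Proof. ring. Qed.
End S.

Lemma Knorm_ge0 k (a : K k) : 0 <= Knorm k a.
Proof. destruct k; simpl. apply Rabs_pos. apply sqrt_pos. Qed.

Lemma Knorm_mul k (a b : K k) : Knorm k (Kmul k a b) = Knorm k a * Knorm k b.
Proof. destruct k; simpl. apply Rabs_mult.
  destruct a as [a1 a2], b as [b1 b2]; simpl.
  rewrite <- sqrt_mult by nra. f_equal. ring. Qed.

Lemma Knorm_opp k (a : K k) : Knorm k (Kopp k a) = Knorm k a.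
Proof. destruct k; simpl. apply Rabs_Ropp.
  destruct a as [a1 a2]; simpl. f_equal; ring. Qed.

Lemma Knorm_zero k : Knorm k (Kzero k) = 0.
Proof. destruct k; simpl. apply Rabs_R0. rewrite Rmult_0_l, Rplus_0_l. apply sqrt_0. Qed.

Lemma Knorm_eq0 k (a : K k) : Knorm k a = 0 -> a = Kzero k.
Proof. destruct k; simpl; intro H.
  - destruct (Req_dec a 0); auto. exfalso. apply Rabs_no_R0 in H0. auto.
  - destruct a as [a1 a2]; simpl in *. apply sqrt_eq_0 in H; [|nra].
    assert (a1 = 0) by nra. assert (a2 = 0) by nra. subst; reflexivity. Qed.

Lemma Knorm_tri k (a b : K k) : Knorm k (Kadd k a b) <= Knorm k a + Knorm k b.
Proof. destruct k; simpl. apply Rabs_triang.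
  destruct a as [a1 a2], b as [b1 b2]; simpl.
  set (A := a1*a1+a2*a2). set (B := b1*b1+b2*b2).
  assert (HA : 0 <= A) by (unfold A; nra). assert (HB : 0 <= B) by (unfold B; nra).
  assert (Hs : 0 <= sqrt A + sqrt B) by (pose proof (sqrt_pos A); pose proof (sqrt_pos B); lra).
  rewrite <- (sqrt_Rsqr (sqrt A + sqrt B)) by auto.
  apply sqrt_le_1_alt.
  unfold Rsqr. replace ((sqrt A + sqrt B) * (sqrt A + sqrt B)) with
     (sqrt A * sqrt A + sqrt B * sqrt B + 2 * (sqrt A * sqrt B)) by ring.
  rewrite !sqrt_sqrt by auto. rewrite <- sqrt_mult by auto.
  assert (a1*b1+a2*b2 <= sqrt (A*B)).
  { destruct (Rle_dec (a1*b1+a2*b2) 0). pose proof (sqrt_pos (A*B)); lra.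
    rewrite <- (sqrt_Rsqr (a1*b1+a2*b2)) by lra. apply sqrt_le_1_alt.
    unfold Rsqr, A, B. pose proof (Rle_0_sqr (a1*b2-a2*b1)). unfold Rsqr in *. nra. }
  unfold A, B in *. nra.
Qed.

Section Lin.
Variable k : field_choice.
Add Field Kf : (Kfield k).
Local Notation KK := (K k).
Local Notation V := (omega k).
Local Notation kz := (Kzero k).
Local Notation k1 := (Kone k).
Local Notation "a +: b" := (Kadd k a b) (at level 50, left associativity).
Local Notation "a *: b" := (Kmul k a b) (at level 40, left associativity).
Local Notation "-: a" := (Kopp k a) (at level 35, right associativity).

Fixpoint ksum (n : nat) (h : nat -> KK) : KK :=
  match n with O => kz | S m => ksum m h +: h m end.

Lemma ksum_ext n h h' : (forall i, (i < n)%nat -> h i = h' i) -> ksum n h = ksum n h'.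
Proof. induction n; simpl; intros; auto. rewrite IHn, H; auto. Qed.

Lemma ksum_add n h g : ksum n (fun i => h i +: g i) = ksum n h +: ksum n g.
Proof. induction n; simpl. ring. rewrite IHn; ring. Qed.

Lemma ksum_scal n c h : ksum n (fun i => c *: h i) = c *: ksum n h.
Proof. induction n; simpl. ring. rewrite IHn; ring. Qed.

Lemma ksum_zero n h : (forall i, (i < n)%nat -> h i = kz) -> ksum n h = kz.
Proof. induction n; simpl; intros; auto. rewrite IHn, H; auto. ring. Qed.

Lemma ksum_delta n m h :
  ksum n (fun i => if Nat.eqb i m then h i else kz) = if Nat.ltb m n then h m else kz.
Proof.
  induction n; simpl. destruct m; reflexivity.
  rewrite IHn. destruct (Nat.eqb_spec n m).
  - subst. replace (Nat.ltb m m) with false by (symmetry; apply Nat.ltb_irrefl).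
    replace (Nat.ltb m (S m)) with true by (symmetry; apply Nat.ltb_lt; lia). ring.
  - destruct (Nat.ltb_spec m n); destruct (Nat.ltb_spec m (S n)); try lia; ring.
Qed.

Lemma ksum_pad n N h : (n <= N)%nat -> (forall i, (n <= i < N)%nat -> h i = kz) ->
  ksum N h = ksum n h.
Proof.
  induction N; intros. assert (n = 0%nat) by lia. subst; auto.
  destruct (Nat.eq_dec n (S N)). subst; auto.
  simpl. rewrite IHN. rewrite H0 by lia. ring. lia. intros; apply H0; lia.
Qed.

Lemma lincomb_coord b c n j : lincomb k b c n j = ksum n (fun i => c i *: b i j).
Proof. induction n; simpl. reflexivity. unfold vadd, vscal. rewrite IHn. reflexivity. Qed.

Definition lfun := list (nat * KK).
Fixpoint leval (l : lfun) (x : V) : KK :=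
  match l with nil => kz | p :: l' => (snd p *: x (fst p)) +: leval l' x end.
Fixpoint lbound (l : lfun) : nat :=
  match l with nil => O | p :: l' => Nat.max (S (fst p)) (lbound l') end.
Fixpoint lnorm (l : lfun) : R :=
  match l with nil => 0 | p :: l' => Knorm k (snd p) + lnorm l' end.
Definition lscale (c : KK) (l : lfun) : lfun := map (fun p => (fst p, c *: snd p)) l.

Lemma leval_app l1 l2 x : leval (l1 ++ l2) x = leval l1 x +: leval l2 x.
Proof. induction l1; simpl. ring. rewrite IHl1; ring. Qed.
Lemma leval_scale c l x : leval (lscale c l) x = c *: leval l x.
Proof. induction l; simpl. ring. rewrite IHl; ring. Qed.
Lemma leval_vadd l x y : leval l (vadd k x y) = leval l x +: leval l y.
Proof. induction l; simpl. ring. rewrite IHl; unfold vadd; ring. Qed.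
Lemma leval_vscal l a x : leval l (vscal k a x) = a *: leval l x.
Proof. induction l; simpl. ring. rewrite IHl; unfold vscal; ring. Qed.
Lemma leval_vzero l : leval l (vzero k) = kz.
Proof. induction l; simpl. ring. rewrite IHl; unfold vzero; ring. Qed.
Lemma leval_sub l x y : leval l (fun i => x i +: -: y i) = leval l x +: -: leval l y.
Proof. induction l; simpl. ring. rewrite IHl; ring. Qed.
Lemma leval_lincomb l b c n :
  leval l (lincomb k b c n) = ksum n (fun i => c i *: leval l (b i)).
Proof. induction n; simpl. apply leval_vzero. rewrite leval_vadd, leval_vscal, IHn. reflexivity. Qed.
Lemma leval_local l x y : (forall i, (i < lbound l)%nat -> x i = y i) -> leval l x = leval l y.
Proof. induction l as [|[i c] l IH]; cbn [leval lbound lnorm fst snd]; intros; auto.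
  rewrite IH. rewrite H. reflexivity. lia. intros; apply H; lia. Qed.
Lemma lnorm_ge0 l : 0 <= lnorm l.
Proof. induction l; simpl. lra. pose proof (Knorm_ge0 k (snd a)); lra. Qed.
Lemma leval_est l z d : 0 <= d -> (forall i, (i < lbound l)%nat -> Knorm k (z i) <= d) ->
  Knorm k (leval l z) <= lnorm l * d.
Proof. induction l as [|[i c] l IH]; cbn [leval lbound lnorm fst snd]; intros.
  - rewrite Knorm_zero. lra.
  - eapply Rle_trans. apply Knorm_tri. rewrite Knorm_mul.
    assert (Knorm k (z i) <= d) by (apply H0; lia).
    pose proof (Knorm_ge0 k c).
    assert (Knorm k (leval l z) <= lnorm l * d) by (apply IH; auto; intros; apply H0; lia).
    nra.
Qed.

Fixpoint lsumf (n : nat) (c : nat -> KK) (f : nat -> lfun) : lfun :=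
  match n with O => nil | S m => lsumf m c f ++ lscale (c m) (f m) end.
Lemma leval_lsumf n c f x : leval (lsumf n c f) x = ksum n (fun i => c i *: leval (f i) x).
Proof. induction n; simpl. reflexivity. rewrite leval_app, leval_scale, IHn. reflexivity. Qed.

Fixpoint lcomp (l : lfun) (H : nat -> lfun) : lfun :=
  match l with nil => nil | p :: l' => lscale (snd p) (H (fst p)) ++ lcomp l' H end.
Lemma leval_lcomp l H x : leval (lcomp l H) x = leval l (fun n => leval (H n) x).
Proof. induction l; simpl. reflexivity. rewrite leval_app, leval_scale, IHl. reflexivity. Qed.

Definition unitv (j : nat) : V := fun i => if Nat.eqb i j then k1 else kz.

Lemma leval_unit_far l j : (lbound l <= j)%nat -> leval l (unitv j) = kz.
Proof. intros. rewrite (leval_local l (unitv j) (vzero k)). apply leval_vzero.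
  intros. unfold unitv, vzero. destruct (Nat.eqb_spec i j); auto. lia. Qed.

Lemma leval_unit_expand l y :
  leval l y = ksum (lbound l) (fun j => leval l (unitv j) *: y j).
Proof.
  induction l as [|[i c] l IH]; cbn [leval lbound lnorm fst snd ksum]. reflexivity.
  rewrite (ksum_ext _ _ (fun j => (if Nat.eqb j i then c *: y i else kz) +: leval l (unitv j) *: y j)).
  2:{ intros j _. unfold unitv. rewrite (Nat.eqb_sym i j). destruct (Nat.eqb_spec j i). subst; ring. ring. }
  rewrite ksum_add.
  rewrite (ksum_ext _ (fun j => if Nat.eqb j i then c *: y i else kz)
            (fun j => if Nat.eqb j i then c *: y j else kz)).
  2:{ intros j _. destruct (Nat.eqb_spec j i); subst; auto. }
  rewrite ksum_delta. replace (Nat.ltb i (Nat.max (S i) (lbound l))) with true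
    by (symmetry; apply Nat.ltb_lt; lia).
  rewrite (ksum_pad (lbound l)). rewrite <- IH. reflexivity. lia.
  intros. rewrite leval_unit_far by lia. ring.
Qed.

Definition Mof (L : nat -> lfun) : V -> V := fun x n => leval (L n) x.

Lemma Mof_linear L : is_linear_map k (Mof L).
Proof. split; intros; unfold Mof; apply functional_extensionality; intro n.
  rewrite leval_vadd; reflexivity. rewrite leval_vscal; reflexivity. Qed.

Lemma Mof_cont L : continuous_omega k (Mof L).
Proof.
  intros x n eps Heps. unfold Mof.
  pose proof (lnorm_ge0 (L n)).
  exists (lbound (L n)), (eps / (lnorm (L n) + 1)). split.
  apply Rdiv_lt_0_compat; lra.
  intros y Hy. unfold Kdist. rewrite <- leval_sub.
  eapply Rle_lt_trans. apply leval_est with (d := eps / (lnorm (L n) + 1)).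
  apply Rlt_le, Rdiv_lt_0_compat; lra.
  intros. apply Rlt_le. apply Hy; auto.
  apply Rlt_le_trans with ((lnorm (L n) + 1) * (eps / (lnorm (L n) + 1))).
  apply Rmult_lt_compat_r. apply Rdiv_lt_0_compat; lra. lra.
  right. field. lra.
Qed.

End Lin.

Lemma Kone_neq k : Kone k <> Kzero k.
Proof. destruct k; simpl. lra. intro H; injection H; lra. Qed.

Definition upd {T : Type} (s : nat -> T) (m : nat) (t : T) : nat -> T :=
  fun i => if Nat.eqb i m then t else s i.

Section Cons.
Variable k : field_choice.
Add Field Kf : (Kfield k).
Local Notation KK := (K k).
Local Notation V := (omega k).
Local Notation kz := (Kzero k).
Local Notation k1 := (Kone k).
Local Notation "a +: b" := (Kadd k a b) (at level 50, left associativity).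
Local Notation "a *: b" := (Kmul k a b) (at level 40, left associativity).
Local Notation "-: a" := (Kopp k a) (at level 35, right associativity).
Local Notation ksum := (ksum k).
Local Notation leval := (leval k).
Local Notation lfun := (lfun k).

Lemma lincomb_ext (b b' : nat -> V) c c' m :
  (forall i, (i < m)%nat -> b i = b' i /\ c i = c' i) -> lincomb k b c m = lincomb k b' c' m.
Proof. induction m; simpl; intros; auto. rewrite IHm by (intros; apply H; lia).
  destruct (H m) as [H1 H2]; [lia|]. rewrite H1, H2; reflexivity. Qed.

Variable E : V -> Prop.
Hypothesis HEs : is_subspace k E.
Hypothesis HEd : dense k E.

Lemma E_lincomb b c n : (forall i, (i < n)%nat -> E (b i)) -> E (lincomb k b c n).
Proof. destruct HEs as [H0 [Ha Hs]]. induction n; simpl; intros; auto.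
  apply Ha. apply IHn; intros; apply H; lia. apply Hs, H; lia. Qed.

Definition BO m (a : nat -> V) (f : nat -> lfun) :=
  (forall i, (i < m)%nat -> E (a i)) /\
  (forall i j, (i < m)%nat -> (j < m)%nat -> leval (f i) (a j) = if Nat.eqb i j then k1 else kz).

Definition Ext m (a : nat -> V) (f : nat -> lfun) an fn :=
  E an /\ leval fn an = k1 /\ (forall i, (i < m)%nat -> leval fn (a i) = kz) /\
  (forall i, (i < m)%nat -> leval (f i) an = kz).

Lemma BO_ext m a f an fn : BO m a f -> Ext m a f an fn -> BO (S m) (upd a m an) (upd f m fn).
Proof.
  intros [H1 H2] [X1 [X2 [X3 X4]]]. unfold upd. split.
  - intros i Hi. destruct (Nat.eqb_spec i m); auto. apply H1; lia.
  - intros i j Hi Hj. destruct (Nat.eqb_spec i m); destruct (Nat.eqb_spec j m); subst.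
    + rewrite Nat.eqb_refl; auto.
    + rewrite X3 by lia. destruct (Nat.eqb_spec m j); [lia|auto].
    + rewrite X4 by lia. destruct (Nat.eqb_spec i m); [lia|auto].
    + apply H2; lia.
Qed.

Lemma ksum_bo m (c : nat -> KK) i : (i < m)%nat ->
  ksum m (fun j => c j *: (if Nat.eqb i j then k1 else kz)) = c i.
Proof. intros. rewrite (ksum_ext k _ _ (fun j => if Nat.eqb j i then c j else kz)).
  rewrite ksum_delta. replace (Nat.ltb i m) with true by (symmetry; apply Nat.ltb_lt; lia). auto.
  intros j _. rewrite (Nat.eqb_sym j i). destruct (Nat.eqb i j); ring. Qed.

Definition pv m (a : nat -> V) (f : nat -> lfun) v :=
  vadd k v (vscal k (-: k1) (lincomb k a (fun i => leval (f i) v) m)).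

Lemma pv_f m a f v i : BO m a f -> (i < m)%nat -> leval (f i) (pv m a f v) = kz.
Proof. intros [_ H2] Hi. unfold pv. rewrite leval_vadd, leval_vscal, leval_lincomb.
  rewrite (ksum_ext k _ _ (fun j => leval (f j) v *: (if Nat.eqb i j then k1 else kz))).
  rewrite ksum_bo by auto. ring. intros; rewrite H2; auto. Qed.

Lemma pv_E m a f v : BO m a f -> E v -> E (pv m a f v).
Proof. intros [H1 _] Hv. destruct HEs as [_ [Ha Hs]]. unfold pv. apply Ha; auto.
  apply Hs. apply E_lincomb. auto. Qed.

Lemma pv_decomp m a f v : v = vadd k (lincomb k a (fun i => leval (f i) v) m) (pv m a f v).
Proof. apply functional_extensionality; intro j. unfold pv, vadd, vscal. ring. Qed.

Definition pf m (a : nat -> V) (f : nat -> lfun) (g : lfun) : lfun :=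
  g ++ lsumf k m (fun i => -: leval g (a i)) f.

Lemma leval_pf m a f g x :
  leval (pf m a f g) x = leval g x +: -: ksum m (fun i => leval g (a i) *: leval (f i) x).
Proof. unfold pf. rewrite leval_app, leval_lsumf.
  rewrite (ksum_ext k _ _ (fun i => -: k1 *: (leval g (a i) *: leval (f i) x))) by (intros; ring).
  rewrite ksum_scal. ring. Qed.

Lemma pf_a m a f g j : BO m a f -> (j < m)%nat -> leval (pf m a f g) (a j) = kz.
Proof. intros [_ H2] Hj. rewrite leval_pf.
  rewrite (ksum_ext k _ _ (fun i => leval g (a i) *: (if Nat.eqb i j then k1 else kz))).
  rewrite (ksum_ext k _ _ (fun i => if Nat.eqb i j then leval g (a i) else kz)).
  rewrite ksum_delta. replace (Nat.ltb j m) with true by (symmetry; apply Nat.ltb_lt; lia). ring.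
  intros; destruct (Nat.eqb i j); ring.
  intros; rewrite H2; auto. Qed.

Lemma ext_from_vec m a f w j : BO m a f -> E w -> (forall i, (i < m)%nat -> leval (f i) w = kz) ->
  w j <> kz -> Ext m a f w (pf m a f ((j, Kinv k (w j)) :: nil)).
Proof. intros HB Hw Hf Hj. split; [auto|split;[|split]].
  - rewrite leval_pf. rewrite (ksum_zero k m) by (intros; rewrite Hf; auto; ring).
    simpl. field. auto.
  - intros; apply pf_a; auto.
  - auto.
Qed.

Lemma ext_from_fun m a f g x : BO m a f -> (forall i, (i < m)%nat -> leval g (a i) = kz) ->
  E x -> leval g x <> kz -> Ext m a f (vscal k (Kinv k (leval g x)) (pv m a f x)) g.
Proof. intros HB Hg Hx Hgx. split;[|split;[|split]].
  - destruct HEs as [_ [_ Hs]]. apply Hs. apply pv_E; auto.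
  - rewrite leval_vscal. unfold pv. rewrite leval_vadd, leval_vscal, leval_lincomb.
    rewrite (ksum_zero k m) by (intros; rewrite Hg; auto; ring). field. auto.
  - auto.
  - intros. rewrite leval_vscal, pv_f; auto. ring.
Qed.

Lemma Knorm_pos (a : KK) : a <> kz -> 0 < Knorm k a.
Proof. intros. pose proof (Knorm_ge0 k a). destruct (Req_dec (Knorm k a) 0).
  apply Knorm_eq0 in H1; contradiction. lra. Qed.

Lemma dens_fun g x : leval g x <> kz -> exists y, E y /\ leval g y <> kz.
Proof.
  intros Hx. pose proof (Knorm_pos _ Hx) as Hp. pose proof (lnorm_ge0 k g) as Hl.
  set (d := Knorm k (leval g x) / (lnorm k g + 1)).
  assert (Hd : 0 < d) by (apply Rdiv_lt_0_compat; lra).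
  destruct (HEd x (lbound k g) d Hd) as [e [He1 He2]].
  exists e. split; auto. intro Hz.
  assert (Knorm k (leval g (fun i => e i +: -: x i)) <= lnorm k g * d).
  { apply leval_est. lra. intros. apply Rlt_le. apply He2; auto. }
  rewrite leval_sub, Hz in H.
  replace (kz +: -: leval g x) with (-: leval g x) in H by ring.
  rewrite Knorm_opp in H.
  assert (lnorm k g * d < Knorm k (leval g x)).
  { apply Rlt_le_trans with ((lnorm k g + 1) * d). apply Rmult_lt_compat_r; lra.
    right. unfold d. field. lra. }
  lra.
Qed.

Fixpoint maxb (n : nat) (f : nat -> lfun) : nat :=
  match n with O => O | S n' => Nat.max (maxb n' f) (lbound k (f n')) end.
Lemma maxb_ge n f i : (i < n)%nat -> (lbound k (f i) <= maxb n f)%nat.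
Proof. induction n; simpl; intros. lia. destruct (Nat.eq_dec i n). subst; lia.
  specialize (IHn ltac:(lia)). lia. Qed.

Lemma ext_any m a f : BO m a f -> exists an fn, Ext m a f an fn.
Proof.
  intros HB. set (M := maxb m f). set (g := pf m a f ((M, k1) :: nil)).
  assert (Hg : leval g (unitv k M) <> kz).
  { unfold g. rewrite leval_pf.
    rewrite (ksum_zero k m). simpl. unfold unitv. rewrite Nat.eqb_refl.
    replace (k1 *: k1 +: kz +: -: kz) with k1 by ring. apply Kone_neq.
    intros. rewrite leval_unit_far. ring. apply maxb_ge; auto. }
  destruct (dens_fun g _ Hg) as [x [Hx Hgx]].
  eexists; eexists. apply ext_from_fun; eauto. intros; apply pf_a; auto.
Qed.

Lemma lincomb_upd a m an c : lincomb k (upd a m an) c (S m) =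
  vadd k (lincomb k a c m) (vscal k (c m) an).
Proof. simpl. f_equal. apply lincomb_ext. intros; unfold upd.
  destruct (Nat.eqb_spec i m); [lia|auto]. unfold upd. rewrite Nat.eqb_refl; auto. Qed.

Lemma stepA m a f v : BO m a f -> E v ->
  exists an fn, Ext m a f an fn /\ exists c, v = lincomb k (upd a m an) c (S m).
Proof.
  intros HB Hv. destruct (classic (exists j, pv m a f v j <> kz)) as [[j Hj]|Hn].
  - exists (pv m a f v). eexists. split. apply ext_from_vec; eauto.
    apply pv_E; auto. intros; apply pv_f; auto.
    exists (upd (fun i => leval (f i) v) m k1). rewrite lincomb_upd.
    unfold upd at 2. rewrite Nat.eqb_refl.
    rewrite (lincomb_ext a a _ (fun i => leval (f i) v)).
    2:{ intros; split; auto. unfold upd. destruct (Nat.eqb_spec i m); [lia|auto]. }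
    rewrite (pv_decomp m a f v) at 1. f_equal. apply functional_extensionality; intro i.
    unfold vscal. ring.
  - destruct (ext_any m a f HB) as [an [fn He]]. exists an, fn. split; auto.
    exists (upd (fun i => leval (f i) v) m kz). rewrite lincomb_upd.
    unfold upd at 2. rewrite Nat.eqb_refl.
    rewrite (lincomb_ext a a _ (fun i => leval (f i) v)).
    2:{ intros; split; auto. unfold upd. destruct (Nat.eqb_spec i m); [lia|auto]. }
    rewrite (pv_decomp m a f v) at 1. f_equal. apply functional_extensionality; intro i.
    unfold vscal. destruct (classic (pv m a f v i = kz)) as [H|H].
    rewrite H; ring. exfalso; apply Hn; eauto.
Qed.

Lemma ksum_upd m (c : nat -> KK) (f : nat -> lfun) fn d x :
  ksum (S m) (fun i => upd c m d i *: leval (upd f m fn i) x) =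
  ksum m (fun i => c i *: leval (f i) x) +: d *: leval fn x.
Proof. simpl. unfold upd at 3 4. rewrite Nat.eqb_refl. f_equal. apply ksum_ext.
  intros; unfold upd. destruct (Nat.eqb_spec i m); [lia|auto]. Qed.

Lemma stepB m a f g : BO m a f ->
  exists an fn, Ext m a f an fn /\
    exists c, forall x, leval g x = ksum (S m) (fun i => c i *: leval (upd f m fn i) x).
Proof.
  intros HB. set (g' := pf m a f g).
  assert (Hd : forall x, leval g x = leval g' x +: ksum m (fun i => leval g (a i) *: leval (f i) x)).
  { intros. unfold g'. rewrite leval_pf. ring. }
  destruct (classic (exists x, leval g' x <> kz)) as [[x Hx]|Hn].
  - destruct (dens_fun g' x Hx) as [y [Hy Hgy]].
    eexists; exists g'. split. apply ext_from_fun; eauto. intros; apply pf_a; auto.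
    exists (upd (fun i => leval g (a i)) m k1). intros z. rewrite ksum_upd, Hd. ring.
  - destruct (ext_any m a f HB) as [an [fn He]]. exists an, fn. split; auto.
    exists (upd (fun i => leval g (a i)) m kz). intros z. rewrite ksum_upd, Hd.
    destruct (classic (leval g' z = kz)) as [H|H]. rewrite H; ring. exfalso; apply Hn; eauto.
Qed.

Variable b : nat -> V.
Hypothesis Hb : forall i, E (b i).

Definition StepGoal m (a : nat -> V) (f : nat -> lfun) :=
  (Nat.even m = true -> exists c, b (Nat.div2 m) = lincomb k a c (S m)) /\
  (Nat.even m = false -> exists c, forall x, x (Nat.div2 m) = ksum (S m) (fun i => c i *: leval (f i) x)).

Lemma stepAll m a f : exists p : V * lfun, BO m a f ->
  Ext m a f (fst p) (snd p) /\ StepGoal m (upd a m (fst p)) (upd f m (snd p)).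
Proof.
  destruct (classic (BO m a f)) as [HB|HB].
  - destruct (Nat.even m) eqn:He.
    + destruct (stepA m a f (b (Nat.div2 m)) HB (Hb _)) as [an [fn [H1 [c H2]]]].
      exists (an, fn). intros _. simpl. split; auto. split; intros; [eauto|congruence].
    + destruct (stepB m a f ((Nat.div2 m, k1) :: nil) HB) as [an [fn [H1 [c H2]]]].
      exists (an, fn). intros _. simpl. split; auto. split; intros; [congruence|].
      exists c. intros x. rewrite <- H2. simpl. ring.
  - exists (vzero k, nil). intro; contradiction.
Qed.

Definition stepf m a f : V * lfun :=
  proj1_sig (constructive_indefinite_description _ (stepAll m a f)).
Lemma stepf_spec m a f : BO m a f ->
  Ext m a f (fst (stepf m a f)) (snd (stepf m a f)) /\
  StepGoal m (upd a m (fst (stepf m a f))) (upd f m (snd (stepf m a f))).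
Proof. unfold stepf. destruct (constructive_indefinite_description _ _); auto. Qed.

Fixpoint seqs (n : nat) : (nat -> V) * (nat -> lfun) :=
  match n with
  | O => (fun _ => vzero k, fun _ => nil)
  | S n' => let s := seqs n' in
      (upd (fst s) n' (fst (stepf n' (fst s) (snd s))),
       upd (snd s) n' (snd (stepf n' (fst s) (snd s))))
  end.

Lemma seqs_BO n : BO n (fst (seqs n)) (snd (seqs n)).
Proof. induction n. split; intros; lia.
  simpl. apply BO_ext; auto. apply stepf_spec; auto. Qed.

Lemma seqs_goal n : StepGoal n (fst (seqs (S n))) (snd (seqs (S n))).
Proof. simpl. apply stepf_spec. apply seqs_BO. Qed.

Lemma seqs_stable n j : (j < n)%nat ->
  fst (seqs n) j = fst (seqs (S j)) j /\ snd (seqs n) j = snd (seqs (S j)) j.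
Proof. induction n; intros. lia. destruct (Nat.eq_dec j n). subst; auto.
  destruct IHn as [I1 I2]. lia. simpl. unfold upd.
  destruct (Nat.eqb_spec j n); [lia|]. simpl in I1, I2. auto. Qed.

Definition Aseq j := fst (seqs (S j)) j.
Definition Fseq j := snd (seqs (S j)) j.

Lemma P1 : (forall j, E (Aseq j)) /\
  (forall i j, leval (Fseq i) (Aseq j) = if Nat.eqb i j then k1 else kz).
Proof. split.
  - intros j. destruct (seqs_BO (S j)) as [H _]. apply H; lia.
  - intros i j. destruct (seqs_BO (S (Nat.max i j))) as [_ H].
    unfold Aseq, Fseq. destruct (seqs_stable (S (Nat.max i j)) j) as [S1 _]. lia.
    destruct (seqs_stable (S (Nat.max i j)) i) as [_ S2]. lia.
    rewrite <- S1, <- S2. apply H; lia.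
Qed.

Lemma P3 q : exists p : nat * (nat -> KK), forall x,
  x q = ksum (fst p) (fun i => snd p i *: leval (Fseq i) x).
Proof. destruct (seqs_goal (S (2 * q))) as [_ H].
  replace (Nat.div2 (S (2 * q))) with q in H by (symmetry; apply Nat.div2_succ_double).
  destruct H as [c Hc]. rewrite Nat.even_succ, Nat.odd_mul; simpl; auto.
  exists (S (S (2 * q)), c). simpl fst; simpl snd. intros x. rewrite Hc. apply ksum_ext.
  intros. unfold Fseq. destruct (seqs_stable (S (S (2 * q))) i) as [_ S2]. lia. rewrite S2. reflexivity.
Qed.

Lemma P2b q : exists n c, b q = lincomb k Aseq c n.
Proof. destruct (seqs_goal (2 * q)) as [H _].
  replace (Nat.div2 (2 * q)) with q in H by (symmetry; apply Nat.div2_double).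
  destruct H as [c Hc]. apply Nat.even_mul.
  exists (S (2 * q)), c. rewrite Hc. apply lincomb_ext. intros; split; auto.
  unfold Aseq. destruct (seqs_stable (S (2 * q)) i) as [S1 _]. lia. rewrite S1. reflexivity.
Qed.

End Cons.

Section Fin.
Variable k : field_choice.
Add Field Kf : (Kfield k).
Local Notation KK := (K k).
Local Notation V := (omega k).
Local Notation kz := (Kzero k).
Local Notation k1 := (Kone k).
Local Notation "a +: b" := (Kadd k a b) (at level 50, left associativity).
Local Notation "a *: b" := (Kmul k a b) (at level 40, left associativity).
Local Notation "-: a" := (Kopp k a) (at level 35, right associativity).
Local Notation ksum := (ksum k).
Local Notation leval := (leval k).
Local Notation lfun := (lfun k).

Definition inspan (A : nat -> V) v := exists n c, v = lincomb k A c n.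

Lemma lincomb_pad A c n N : (n <= N)%nat ->
  lincomb k A c n = lincomb k A (fun i => if Nat.ltb i n then c i else kz) N.
Proof. intros. apply functional_extensionality; intro j. rewrite !lincomb_coord.
  rewrite (ksum_pad k n N). apply ksum_ext. intros. destruct (Nat.ltb_spec i n); [auto|lia].
  auto. intros. destruct (Nat.ltb_spec i n); [lia|ring]. Qed.

Lemma inspan_add A x y : inspan A x -> inspan A y -> inspan A (vadd k x y).
Proof. intros [n [c Hc]] [n' [c' Hc']]. exists (n + n')%nat.
  exists (fun i => (if Nat.ltb i n then c i else kz) +: (if Nat.ltb i n' then c' i else kz)).
  rewrite Hc, Hc', (lincomb_pad A c n (n + n')), (lincomb_pad A c' n' (n + n')) by lia.
  apply functional_extensionality; intro j. unfold vadd. rewrite !lincomb_coord.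
  rewrite <- ksum_add. apply ksum_ext; intros; ring. Qed.

Lemma inspan_scal A a x : inspan A x -> inspan A (vscal k a x).
Proof. intros [n [c Hc]]. exists n, (fun i => a *: c i). subst.
  apply functional_extensionality; intro j. unfold vscal. rewrite !lincomb_coord.
  rewrite <- ksum_scal. apply ksum_ext; intros; ring. Qed.

Lemma inspan_lincomb A b c n : (forall i, (i < n)%nat -> inspan A (b i)) -> inspan A (lincomb k b c n).
Proof. induction n; simpl; intros. exists O, (fun _ => kz). reflexivity.
  apply inspan_add. apply IHn; intros; apply H; lia. apply inspan_scal, H; lia. Qed.

Fixpoint mkl (M : nat) (d : nat -> KK) : lfun :=
  match M with O => nil | S M' => mkl M' d ++ (M', d M') :: nil end.
Lemma leval_mkl M d y : leval (mkl M d) y = ksum M (fun i => d i *: y i).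
Proof. induction M; simpl. reflexivity. rewrite leval_app, IHM. simpl. ring. Qed.

Lemma construct E : is_subspace k E -> dense k E -> countably_infinite_dim k E ->
  exists (A : nat -> V) (Fn HF : nat -> lfun),
    (forall j, E (A j)) /\
    (forall i j, leval (Fn i) (A j) = if Nat.eqb i j then k1 else kz) /\
    (forall v, E v -> exists n c, v = lincomb k A c n) /\
    (forall x, Mof k HF (Mof k Fn x) = x).
Proof.
  intros Hs Hd [b [Hb [_ Hsp]]].
  set (pq := fun q => proj1_sig (constructive_indefinite_description _ (P3 k E Hs Hd b Hb q))).
  exists (Aseq k E Hs Hd b Hb), (Fseq k E Hs Hd b Hb),
    (fun q => mkl (fst (pq q)) (snd (pq q))).
  destruct (P1 k E Hs Hd b Hb) as [H1 H2].
  split; [auto|split; [auto|split]].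
  - intros v Hv. destruct (Hsp v Hv) as [n [c Hc]]. subst v.
    apply inspan_lincomb. intros. apply P2b.
  - intros x. apply functional_extensionality; intro q. unfold Mof.
    rewrite leval_mkl. unfold pq. destruct (constructive_indefinite_description _ _) as [p Hp].
    simpl. rewrite (Hp x). reflexivity.
Qed.

Lemma Mof_comp H L x : Mof k H (Mof k L x) = Mof k (fun n => lcomp k (H n) L) x.
Proof. apply functional_extensionality; intro n. unfold Mof. rewrite leval_lcomp. reflexivity. Qed.

Lemma inv_other (A : nat -> V) (Fn HF : nat -> lfun) :
  (forall i j, leval (Fn i) (A j) = if Nat.eqb i j then k1 else kz) ->
  (forall x, Mof k HF (Mof k Fn x) = x) ->
  forall y, Mof k Fn (Mof k HF y) = y.
Proof.
  intros Hbo Hinv y. apply functional_extensionality; intro m.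
  assert (HA : forall j, Mof k Fn (A j) = unitv k j).
  { intros j. apply functional_extensionality; intro i. unfold Mof, unitv. rewrite Hbo. reflexivity. }
  assert (HU : forall j, Mof k HF (unitv k j) = A j).
  { intros j. rewrite <- HA. apply Hinv. }
  unfold Mof. rewrite <- (leval_lcomp k (Fn m) HF y).
  set (L := lcomp k (Fn m) HF).
  assert (HL : forall j, leval L (unitv k j) = if Nat.eqb m j then k1 else kz).
  { intros j. unfold L. rewrite leval_lcomp. change (fun n => leval (HF n) (unitv k j))
      with (Mof k HF (unitv k j)). rewrite HU. apply Hbo. }
  rewrite leval_unit_expand.
  rewrite (ksum_ext k _ _ (fun j => if Nat.eqb j m then y j else kz)).
  rewrite ksum_delta. destruct (Nat.ltb_spec m (lbound k L)). auto.
  exfalso. pose proof (HL m). rewrite leval_unit_far in H0 by lia.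
  rewrite Nat.eqb_refl in H0. apply (Kone_neq k); auto.
  intros j _. rewrite HL, Nat.eqb_sym. destruct (Nat.eqb j m); ring.
Qed.

Lemma lin_lincomb (T : V -> V) b c n : is_linear_map k T ->
  T (lincomb k b c n) = lincomb k (fun i => T (b i)) c n.
Proof. intros [Ha Hs]. induction n; simpl.
  - replace (vzero k) with (vscal k kz (vzero k)).
    rewrite Hs. apply functional_extensionality; intro i; unfold vscal, vzero; ring.
    apply functional_extensionality; intro i; unfold vscal, vzero; ring.
  - rewrite Ha, Hs, IHn. reflexivity.
Qed.

End Fin.

Theorem theorem3p1 (k : field_choice) (E F : omega k -> Prop) :
  is_subspace k E -> dense k E -> countably_infinite_dim k E ->
  is_subspace k F -> dense k F -> countably_infinite_dim k F ->
  exists J : omega k -> omega k,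
    in_GL k J /\ (forall y, F y <-> exists x, E x /\ J x = y).
Proof.
  intros HEs HEd HEc HFs HFd HFc.
  destruct (construct k E HEs HEd HEc) as [A [Fn [HF [HA1 [HA2 [HA3 HA4]]]]]].
  destruct (construct k F HFs HFd HFc) as [B [Gn [HG [HB1 [HB2 [HB3 HB4]]]]]].
  pose proof (inv_other k A Fn HF HA2 HA4) as HA5.
  pose proof (inv_other k B Gn HG HB2 HB4) as HB5.
  set (J := Mof k (fun n => lcomp k (HG n) Fn)).
  set (S := Mof k (fun n => lcomp k (HF n) Gn)).
  assert (HJ : forall x, J x = Mof k HG (Mof k Fn x)) by (intros; unfold J; rewrite Mof_comp; auto).
  assert (HS : forall x, S x = Mof k HF (Mof k Gn x)) by (intros; unfold S; rewrite Mof_comp; auto).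
  assert (HJl : is_linear_map k J) by apply Mof_linear.
  assert (HJA : forall j, J (A j) = B j).
  { intros j. rewrite HJ.
    replace (Mof k Fn (A j)) with (Mof k Gn (B j)). apply HB4.
    apply functional_extensionality; intro i. unfold Mof. rewrite HA2, HB2. reflexivity. }
  exists J. split.
  - split; [auto|split; [apply Mof_cont|]].
    exists S. split; [apply Mof_cont|split]; intros.
    + rewrite HS, HJ, HB5. apply HA4.
    + rewrite HJ, HS, HA5. apply HB4.
  - intros y. split.
    + intros Hy. destruct (HB3 y Hy) as [n [c Hc]].
      exists (lincomb k A c n). split. apply E_lincomb; auto.
      rewrite lin_lincomb by auto. rewrite Hc. apply lincomb_ext. intros; auto.
    + intros [x [Hx Hxy]]. subst y. destruct (HA3 x Hx) as [n [c Hc]]. subst x.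
      rewrite lin_lincomb by auto. rewrite (lincomb_ext k _ B c c). apply E_lincomb; auto.
      intros; auto.
Qed.
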